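(* Let $\mathbb{X}$ be a linearly ordered radicable idempotent semifield, $n\ge1$, $\bm{A},\bm{B}\in\mathbb{X}^{n\times n}$ with $\lambda=\bigoplus_{k=1}^{n}(\mathrm{tr}\,\bm{A}^{k})^{1/k}$ the spectral radius of $\bm{A}$ and $\mathrm{Tr}(\bm{B})\le\mathbb{1}$, $\bm{p}\in\mathbb{X}^n$, $\bm{q}\in\mathbb{X}^n$ a regular vector, and $r\in\mathbb{X}$ with $\lambda\oplus(\bm{q}^{-}\bm{p})^{1/2}\oplus r>\mathbb{0}$. Consider minimizing $\bm{x}^{-}\bm{A}\bm{x}\oplus\bm{x}^{-}\bm{p}\oplus\bm{q}^{-}\bm{x}\oplus r$ over regular $\bm{x}\in\mathbb{X}^n$ subject to $\bm{B}\bm{x}\le\bm{x}$. Then the minimum value is $$\theta=\bigoplus_{k=1}^{n}(\mathrm{tr}\,\bm{S}_{k})^{1/k}\oplus\bigoplus_{k=0}^{n-1}(\bm{q}^{-}\bm{T}_{k}\bm{p})^{1/(k+2)}\oplus r,$$ and all regular solutions are exactly the vectors $\bm{x}=(\theta^{-1}\bm{A}\oplus\bm{B})^{\ast}\bm{u}$, where $\bm{u}$ is any vector with $\theta^{-1}\bm{p}\le\bm{u}\le\theta\big(\bm{q}^{-}(\theta^{-1}\bm{A}\oplus\bm{B})^{\ast}\big)^{-}$.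
   Context: An idempotent semifield is $(\mathbb{X},\oplus,\otimes,\mathbb{0},\mathbb{1})$ where $(\mathbb{X},\oplus,\mathbb{0})$ is a commutative monoid with idempotent addition, $(\mathbb{X}\setminus\{\mathbb{0}\},\otimes,\mathbb{1})$ is an abelian group, and $\otimes$ distributes over $\oplus$; the product sign is omitted. The order is $x\le y$ iff $x\oplus y=y$, assumed linear; ''minimum'' refers to this order. Radicable means $x^m=a$ is solvable for all $a$ and integers $m\ge1$, so rational powers are defined. Matrix/vector operations use $\oplus,\otimes$; inequalities are entrywise. $\bm{I}$ is the identity matrix, $\bm{A}^0=\bm{I}$. A vector is regular if all entries are nonzero. For a nonzero vector $\bm{x}$ (row or column), $\bm{x}^{-}$ is the transposed vector with entries $x_i^{-1}$ if $x_i\ne\mathbb{0}$ and $\mathbb{0}$ otherwise. $\mathrm{tr}\,\bm{A}=a_{11}\oplus\cdots\oplus a_{nn}$; $\mathrm{Tr}(\bm{A})=\mathrm{tr}\,\bm{A}\oplus\cdots\oplus\mathrm{tr}\,\bm{A}^{n}$; $\bm{A}^{\ast}=\bm{I}\oplus\bm{A}\oplus\cdots\oplus\bm{A}^{n-1}$. For $k=1,\dots,n$, $\bm{S}_k=\bigoplus_{0\le i_1+\cdots+i_k\le n-k}\bm{A}\bm{B}^{i_1}\cdots\bm{A}\bm{B}^{i_k}$ (over nonnegative integers $i_j$); $\bm{T}_0=\bm{B}^{\ast}$ and, for $k=1,\dots,n-1$, $\bm{T}_k=\bigoplus_{0\le i_0+i_1+\cdots+i_k\le n-k-1}\bm{B}^{i_0}\bm{A}\bm{B}^{i_1}\cdots\bm{A}\bm{B}^{i_k}$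 (over nonnegative integers $i_j$). *)

(* Defs.v *)
From mathcomp Require Import all_boot.
Set Implicit Arguments.
Unset Strict Implicit.
Unset Printing Implicit Defensive.

Record lrisemifield := LRISemifield {
  carrier :> Type;
  sadd : carrier -> carrier -> carrier;
  smul : carrier -> carrier -> carrier;
  szero : carrier;
  sone : carrier;
  sinv : carrier -> carrier;   (* group inverse on nonzero elements; sinv 0 = 0 by convention *)
  sroot : nat -> carrier -> carrier;
  addA : forall x y z, sadd x (sadd y z) = sadd (sadd x y) z;
  addC : forall x y, sadd x y = sadd y x;
  add0x : forall x, sadd szero x = x;
  addxx : forall x, sadd x x = x;
  mulA : forall x y z, smul x (smul y z) = smul (smul x y) z;
  mulC : forall x y, smul x y = smul y x;
  mul1x : forall x, smul sone x = x;
  one_neq0 : sone <> szero;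
  mul_neq0 : forall x y, x <> szero -> y <> szero -> smul x y <> szero;
  mulVx : forall x, x <> szero -> smul (sinv x) x = sone;
  inv_neq0 : forall x, x <> szero -> sinv x <> szero;
  inv0 : sinv szero = szero;
  mul0x : forall x, smul szero x = szero;
  mulDr : forall x y z, smul x (sadd y z) = sadd (smul x y) (smul x z);
  (* the order x <= y iff x + y = y is linear *)
  add_total : forall x y, sadd x y = x \/ sadd x y = y;
  rootP : forall m a, 0 < m -> Nat.iter m (smul (sroot m a)) sone = a
}.

Section Defs.
Variable X : lrisemifield.
Variable n : nat.

Definition sle (x y : X) : Prop := sadd x y = y.
Definition slt (x y : X) : Prop := sle x y /\ x <> y.

Definition vec := 'I_n -> X.
Definition mat := 'I_n -> 'I_n -> X.

Definition vle (u v : vec) : Prop := forall i, sle (u i) (v i).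
Definition regular (x : vec) : Prop := forall i, x i <> szero X.

(* x^- : entrywise inverse (szero entries stay szero since sinv 0 = 0); we
   represent row vectors also as functions 'I_n -> X *)
Definition vinv (x : vec) : vec := fun i => sinv (x i).

Definition vdot (u x : vec) : X := \big[@sadd X/szero X]_(i < n) smul (u i) (x i).
Definition mvec (A : mat) (x : vec) : vec :=
  fun i => \big[@sadd X/szero X]_(j < n) smul (A i j) (x j).
Definition vmat (u : vec) (A : mat) : vec :=
  fun j => \big[@sadd X/szero X]_(i < n) smul (u i) (A i j).
Definition vscale (c : X) (x : vec) : vec := fun i => smul c (x i).

Definition mzero : mat := fun _ _ => szero X.
Definition mid : mat := fun i j => if i == j then sone X else szero X.
Definition madd (A B : mat) : mat := fun i j => sadd (A i j) (B i j).
Definition mmul (A B : mat) : mat :=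
  fun i j => \big[@sadd X/szero X]_(k < n) smul (A i k) (B k j).
Definition mscale (c : X) (A : mat) : mat := fun i j => smul c (A i j).
Definition mpow (A : mat) (k : nat) : mat := Nat.iter k (mmul A) mid.

Definition tr (A : mat) : X := \big[@sadd X/szero X]_(i < n) A i i.
Definition Tr (A : mat) : X := \big[@sadd X/szero X]_(k < n) tr (mpow A k.+1).
Definition star (A : mat) : mat := \big[madd/mzero]_(k < n) mpow A k.

Definition specrad (A : mat) : X :=
  \big[@sadd X/szero X]_(k < n) sroot k.+1 (tr (mpow A k.+1)).

(* S_k = sum over i_1+...+i_k <= n-k of A B^{i_1} ... A B^{i_k} *)
Definition Smat (A B : mat) (k : nat) : mat :=
  \big[madd/mzero]_(i : {ffun 'I_k -> 'I_(n - k).+1}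
                     | \sum_(j < k) (i j : nat) <= n - k)
     \big[mmul/mid]_(j < k) mmul A (mpow B (i j)).

(* T_0 = B^*, T_k = sum over i_0+...+i_k <= n-k-1 of
   B^{i_0} A B^{i_1} ... A B^{i_k} *)
Definition Tmat (A B : mat) (k : nat) : mat :=
  if k is 0 then star B else
  \big[madd/mzero]_(i : {ffun 'I_k.+1 -> 'I_(n - k)}
                     | \sum_(j < k.+1) (i j : nat) <= n - k - 1)
     mmul (mpow B (i ord0))
          (\big[mmul/mid]_(j < k) mmul A (mpow B (i (lift ord0 j)))).

Definition objective (A : mat) (p q : vec) (r : X) (x : vec) : X :=
  sadd (sadd (sadd (vdot (vinv x) (mvec A x)) (vdot (vinv x) p)) (vdot (vinv q) x)) r.

Definition theta (A B : mat) (p q : vec) (r : X) : X :=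
  sadd (sadd (\big[@sadd X/szero X]_(k < n) sroot k.+1 (tr (Smat A B k.+1)))
           (\big[@sadd X/szero X]_(k < n) sroot k.+2 (vdot (vinv q) (mvec (Tmat A B k) p))))
      r.

End Defs.

(* Main.v *)
From HB Require Import structures.
Require Import Defs.
From mathcomp Require Import all_boot.
From Stdlib Require Import Classical FunctionalExtensionality.
From mathcomp Require Import zify.
Set Implicit Arguments. Unset Strict Implicit. Unset Printing Implicit Defensive.

HB.instance Definition _ (X : lrisemifield) :=
  Monoid.isComLaw.Build (carrier X) (szero X) (@sadd X) (@addA X) (@addC X) (@add0x X).

Section Alg.
Variable X : lrisemifield.
Local Notation "a ⊕ b" := (@sadd X a b) (at level 50, left associativity).
Local Notation "a ⊗ b" := (@smul X a b) (at level 40, left associativity).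
Local Notation "a ≼ b" := (@sle X a b) (at level 70).
Local Notation "𝟘" := (szero X).
Local Notation "𝟙" := (sone X).

Lemma le_refl (x : X) : x ≼ x. Proof. exact: addxx. Qed.
Lemma le_trans (x y z : X) : x ≼ y -> y ≼ z -> x ≼ z.
Proof. rewrite /sle => h1 h2. by rewrite -h2 addA h1. Qed.
Lemma le_anti (x y : X) : x ≼ y -> y ≼ x -> x = y.
Proof. rewrite /sle => h1 h2. by rewrite -h1 addC. Qed.
Lemma le0x (x : X) : 𝟘 ≼ x. Proof. exact: add0x. Qed.
Lemma le_addl (x y : X) : x ≼ x ⊕ y. Proof. by rewrite /sle addA addxx. Qed.
Lemma le_addr (x y : X) : y ≼ x ⊕ y. Proof. by rewrite addC; apply: le_addl. Qed.
Lemma add_le (x y z : X) : x ≼ z -> y ≼ z -> x ⊕ y ≼ z.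
Proof. rewrite /sle => h1 h2. by rewrite -addA h2 h1. Qed.
Lemma add_leP (x y z : X) : x ⊕ y ≼ z -> x ≼ z /\ y ≼ z.
Proof. move=> h; split; apply: le_trans h; [apply: le_addl|apply: le_addr]. Qed.
Lemma le_total (x y : X) : x ≼ y \/ y ≼ x.
Proof. rewrite /sle; case: (add_total x y) => h; [right; by rewrite addC|by left]. Qed.
Lemma add_mono (x y x' y' : X) : x ≼ x' -> y ≼ y' -> x ⊕ y ≼ x' ⊕ y'.
Proof. move=> h1 h2; apply: add_le; [apply: le_trans h1 (le_addl _ _)|apply: le_trans h2 (le_addr _ _)]. Qed.
Lemma mulx0 (x : X) : x ⊗ 𝟘 = 𝟘. Proof. by rewrite mulC mul0x. Qed.
Lemma mulx1 (x : X) : x ⊗ 𝟙 = x. Proof. by rewrite mulC mul1x. Qed.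
Lemma mulDl (x y z : X) : (x ⊕ y) ⊗ z = x ⊗ z ⊕ y ⊗ z.
Proof. by rewrite mulC mulDr !(mulC z). Qed.
Lemma mul_le (x y z : X) : x ≼ y -> z ⊗ x ≼ z ⊗ y.
Proof. rewrite /sle => h. by rewrite -mulDr h. Qed.
Lemma mul_ler (x y z : X) : x ≼ y -> x ⊗ z ≼ y ⊗ z.
Proof. rewrite !(mulC _ z); exact: mul_le. Qed.
Lemma mul_mono (x y x' y' : X) : x ≼ x' -> y ≼ y' -> x ⊗ y ≼ x' ⊗ y'.
Proof. move=> h1 h2; apply: le_trans (mul_ler _ h1) (mul_le _ h2). Qed.
Lemma mulxV (x : X) : x <> 𝟘 -> x ⊗ sinv x = 𝟙.
Proof. by move=> h; rewrite mulC mulVx. Qed.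
Lemma mul_cancel (x y z : X) : z <> 𝟘 -> z ⊗ x ≼ z ⊗ y -> x ≼ y.
Proof. move=> hz h. have := mul_le (sinv z) h. by rewrite !mulA mulVx // !mul1x. Qed.
Lemma mul_cancelr (x y z : X) : z <> 𝟘 -> x ⊗ z ≼ y ⊗ z -> x ≼ y.
Proof. rewrite !(mulC _ z); exact: mul_cancel. Qed.
Lemma le_eq0 (x : X) : x ≼ 𝟘 -> x = 𝟘.
Proof. move=> h; apply: le_anti h (le0x _). Qed.
Lemma neq0_le (x y : X) : y <> 𝟘 -> y ≼ x -> x <> 𝟘.
Proof. move=> hy h hx; apply: hy; apply: le_eq0; by rewrite -hx. Qed.
Lemma mul_eq0 (x y : X) : x ⊗ y = 𝟘 -> x = 𝟘 \/ y = 𝟘.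
Proof. move=> h; case: (classic (x = 𝟘)) => hx; [by left|right].
  by case: (classic (y = 𝟘)) => // hy; case: (mul_neq0 hx hy). Qed.

Definition pw (x : X) (k : nat) : X := Nat.iter k (smul x) 𝟙.
Lemma pwS x k : pw x k.+1 = x ⊗ pw x k. Proof. by []. Qed.
Lemma pw_le (x y : X) k : x ≼ y -> pw x k ≼ pw y k.
Proof. move=> h; elim: k => [|k IH]; first exact: le_refl. rewrite !pwS; exact: mul_mono. Qed.
Lemma pw_mul (x y : X) k : pw (x ⊗ y) k = pw x k ⊗ pw y k.
Proof. elim: k => [|k IH]; first by rewrite /= mul1x. rewrite !pwS IH.
  by rewrite -!mulA (mulA y) (mulC y) -mulA. Qed.
Lemma pw1 k : pw 𝟙 k = 𝟙.
Proof. elim: k => [|k IH] //. by rewrite pwS IH mul1x. Qed.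
Lemma pwD x a b : pw x (a + b) = pw x a ⊗ pw x b.
Proof. elim: a => [|a IH]; first by rewrite /= mul1x. by rewrite addSn !pwS IH mulA. Qed.
Lemma pw_neq0 x k : x <> 𝟘 -> pw x k <> 𝟘.
Proof. move=> h; elim: k => [|k IH]; first exact: one_neq0. rewrite pwS; exact: mul_neq0. Qed.
Lemma pw_inv x k : x <> 𝟘 -> pw (sinv x) k ⊗ pw x k = 𝟙.
Proof. move=> h; by rewrite -pw_mul mulVx // pw1. Qed.

Lemma lt_mul (x y z : X) : z <> 𝟘 -> x ≼ y -> x <> y -> z ⊗ x <> z ⊗ y.
Proof. move=> hz _ hne heq; apply: hne.
  have := congr1 (smul (sinv z)) heq. by rewrite !mulA mulVx // !mul1x. Qed.

Lemma pw_lt (x y : X) k : 0 < k -> x ≼ y -> x <> y -> pw x k <> pw y k.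
Proof.
move=> hk hle hne. have hy : y <> 𝟘 by move=> hy; apply: hne; rewrite hy; apply: le_eq0; rewrite -hy.
elim: k hk => [|k IH] // _.
case: k IH => [|k] IH.
  by rewrite /pw /= !mulx1.
have IH' := IH isT.
rewrite !pwS => heq. 
have h1 : x ⊗ pw x k.+1 ≼ x ⊗ pw y k.+1 by apply: mul_le; apply: pw_le.
have h2 : x ⊗ pw y k.+1 ≼ y ⊗ pw y k.+1 by apply: mul_ler.
case: (classic (x ⊗ pw x k.+1 = x ⊗ pw y k.+1)) => h3.
  apply: (@lt_mul x y (pw y k.+1)) => //; first exact: pw_neq0.
  by rewrite !(mulC (pw y k.+1)) -h3.
apply: h3; apply: le_anti h1 _; rewrite heq; exact: h2.
Qed.

Lemma root_le (v t : X) k : 0 < k -> v ≼ pw t k -> sroot k v ≼ t.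
Proof.
move=> hk hv. case: (le_total (sroot k v) t) => // h.
case: (classic (t = sroot k v)) => [<-|hne]; first exact: le_refl.
have := pw_lt hk h hne. have hr : pw (sroot k v) k = v by exact: (Defs.rootP v hk).
rewrite hr => hne2; exfalso; apply: hne2; symmetry; apply: le_anti hv _; rewrite -{1}hr; exact: pw_le.
Qed.
Lemma root_pw (v t : X) k : 0 < k -> sroot k v ≼ t -> v ≼ pw t k.
Proof. move=> hk h. rewrite -(Defs.rootP v hk); exact: pw_le. Qed.
Lemma root_mono (a b : X) k : 0 < k -> a ≼ b -> sroot k a ≼ sroot k b.
Proof. move=> hk h; apply: root_le => //; have -> : pw (sroot k b) k = b by exact: (Defs.rootP b hk). done. Qed.

Lemma le_big (I : Type) (r : seq I) (P : pred I) (F : I -> X) y :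
  (forall i, P i -> F i ≼ y) -> \big[@sadd X/𝟘]_(i <- r | P i) F i ≼ y.
Proof. move=> h; apply: (big_ind (fun z => z ≼ y)) => //; [exact: le0x|move=> a b ha hb; exact: add_le]. Qed.
Lemma le_bigP (I : finType) (P : pred I) (F : I -> X) y j :
  P j -> \big[@sadd X/𝟘]_(i | P i) F i ≼ y -> F j ≼ y.
Proof. move=> hj; rewrite (bigD1 j) //= => h; exact: (add_leP h).1. Qed.
Lemma big_term (I : finType) (P : pred I) (F : I -> X) j :
  P j -> F j ≼ \big[@sadd X/𝟘]_(i | P i) F i.
Proof. move=> hj; apply: le_bigP hj _; exact: le_refl. Qed.
Lemma le_bigr m (F : 'I_m -> X) a k : a ≼ F k -> a ≼ \big[@sadd X/𝟘]_(k < m) F k.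
Proof. move=> h; apply: le_trans h _. have H := big_term F (P:=xpredT) isT. exact: (H k). Qed.
Lemma big_mono (I : finType) (P : pred I) (F G : I -> X) :
  (forall i, P i -> F i ≼ G i) -> \big[@sadd X/𝟘]_(i | P i) F i ≼ \big[@sadd X/𝟘]_(i | P i) G i.
Proof. move=> h; apply: le_big => i hi; apply: le_trans (h i hi) (big_term _ hi). Qed.
Lemma sdistrl (I : Type) (r : seq I) (P : pred I) (F : I -> X) a :
  a ⊗ \big[@sadd X/𝟘]_(i <- r | P i) F i = \big[@sadd X/𝟘]_(i <- r | P i) (a ⊗ F i).
Proof. apply: (big_endo (smul a)); [exact: mulDr|exact: mulx0]. Qed.
Lemma sdistrr (I : Type) (r : seq I) (P : pred I) (F : I -> X) a :
  (\big[@sadd X/𝟘]_(i <- r | P i) F i) ⊗ a = \big[@sadd X/𝟘]_(i <- r | P i) (F i ⊗ a).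
Proof. rewrite mulC sdistrl; apply: eq_bigr => i _; exact: mulC. Qed.
Lemma big_wit n (F : 'I_n -> X) : 0 < n -> exists k, \big[@sadd X/𝟘]_(k < n) F k = F k.
Proof.
elim: n F => [|n IH] F // _. rewrite big_ord_recr /=.
case: n IH F => [|n] IH F. by rewrite big_ord0 add0x; exists ord_max.
have [k hk] := IH (fun k => F (widen_ord (leqnSn _) k)) isT. rewrite hk.
case: (add_total (F (widen_ord (leqnSn n.+1) k)) (F ord_max)) => ->; by eexists.
Qed.
End Alg.
Arguments le_bigr {X m F a} k _.

Section Mat.
Variable X : lrisemifield.
Variable n : nat.
Local Notation "a ⊕ b" := (@sadd X a b) (at level 50, left associativity).
Local Notation "a ⊗ b" := (@smul X a b) (at level 40, left associativity).
Local Notation "a ≼ b" := (@sle X a b) (at level 70).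
Local Notation "𝟘" := (szero X).
Local Notation "𝟙" := (sone X).
Local Notation mat := (mat X n).
Local Notation vec := (vec X n).

Lemma madd_entry (I : Type) (r : seq I) (P : pred I) (F : I -> mat) a b :
  (\big[@madd X n/@mzero X n]_(i <- r | P i) F i) a b = \big[@sadd X/𝟘]_(i <- r | P i) F i a b.
Proof. apply: (big_morph (fun M : mat => M a b)); [move=> ? ?; reflexivity|reflexivity]. Qed.

Lemma mmul1l (W : mat) : mmul (@mid X n) W = W.
Proof.
apply: functional_extensionality => i; apply: functional_extensionality => j.
rewrite /mmul (bigD1 i) //= /mid eqxx mul1x big1; [by rewrite addC add0x|].
move=> k /negbTE hk; by rewrite eq_sym hk mul0x.
Qed.
Lemma mmul1r (W : mat) : mmul W (@mid X n) = W.
Proof.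
apply: functional_extensionality => i; apply: functional_extensionality => j.
rewrite /mmul (bigD1 j) //= /mid eqxx mulx1 big1; [by rewrite addC add0x|].
move=> k /negbTE hk; by rewrite hk mulx0.
Qed.
Lemma mmulA (P Q R : mat) : mmul (mmul P Q) R = mmul P (mmul Q R).
Proof.
apply: functional_extensionality => i; apply: functional_extensionality => j.
rewrite /mmul. under eq_bigr => k _ do rewrite sdistrr.
rewrite exchange_big /=. apply: eq_bigr => l _. rewrite sdistrl.
apply: eq_bigr => k _; by rewrite mulA.
Qed.
Lemma mpowD (B : mat) a b : mmul (mpow B a) (mpow B b) = mpow B (a + b).
Proof. elim: a => [|a IH]; first by rewrite mmul1l. by rewrite addSn /= mmulA -IH. Qed.
Lemma mpowS (B : mat) a : mpow B a.+1 = mmul B (mpow B a). Proof. by []. Qed.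

Lemma mvec_mmul_le (P Q : mat) x i : mvec (mmul P Q) x i ≼ mvec P (mvec Q x) i.
Proof.
rewrite /mvec /mmul. apply: le_big => j _. rewrite sdistrr. apply: le_big => k _.
apply: (le_bigr k). rewrite -mulA. apply: mul_le.
apply: (le_bigr j); exact: le_refl.
Qed.
Lemma mvec_mono (P : mat) (x y : vec) i : vle x y -> mvec P x i ≼ mvec P y i.
Proof. move=> h; apply: big_mono => j _; exact: mul_le. Qed.

Definition Wle (x : vec) (W : mat) (c : X) := forall i, mvec W x i ≼ c ⊗ x i.

Lemma Wle_mid x : Wle x (@mid X n) 𝟙.
Proof. move=> i; rewrite mul1x; apply: le_big => j _; rewrite /mid.
  case: eqP => [->|_]; rewrite ?mul1x ?mul0x; [exact: le_refl|exact: le0x]. Qed.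
Lemma Wle_mul x (P Q : mat) a b : Wle x P a -> Wle x Q b -> Wle x (mmul P Q) (a ⊗ b).
Proof.
move=> hP hQ i. apply: le_trans (mvec_mmul_le _ _ _ _) _.
apply: le_trans (mvec_mono P (y := fun k => b ⊗ x k) i hQ) _.
rewrite /mvec. under eq_bigr => j _ do rewrite mulA (mulC (P i j)) -mulA.
rewrite -sdistrl (mulC a) -mulA; apply: mul_le; exact: hP.
Qed.
Lemma Wle_big x (I : Type) (r : seq I) (P : pred I) (F : I -> mat) c :
  (forall k, P k -> Wle x (F k) c) -> Wle x (\big[@madd X n/@mzero X n]_(k <- r | P k) F k) c.
Proof.
move=> h i; rewrite /mvec. apply: le_big => j _. rewrite madd_entry sdistrr.
apply: le_big => k hk. apply: le_trans (h k hk i).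
apply: (le_bigr j); exact: le_refl.
Qed.
Lemma Wle_mono x (W : mat) c d : c ≼ d -> Wle x W c -> Wle x W d.
Proof. move=> hcd h i; apply: le_trans (h i) _; exact: mul_ler. Qed.
Lemma Wle_pow x (B : mat) c m : Wle x B c -> Wle x (mpow B m) (pw c m).
Proof. move=> h; elim: m => [|m IH]; first exact: Wle_mid. exact: Wle_mul. Qed.
Lemma Wle_diag x (W : mat) c : regular x -> Wle x W c -> forall i, W i i ≼ c.
Proof.
move=> hx h i. apply: (mul_cancelr (hx i)). apply: le_trans (h i).
apply: (le_bigr i); exact: le_refl.
Qed.
Lemma Wle_entry x (W : mat) c i j : Wle x W c -> W i j ⊗ x j ≼ c ⊗ x i.
Proof. move=> h; apply: le_trans (h i). apply: (le_bigr j); exact: le_refl. Qed.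

Lemma Wle_prod x (A B : mat) t k (f : 'I_k -> nat) :
  Wle x A t -> Wle x B 𝟙 ->
  Wle x (\big[@mmul X n/@mid X n]_(j < k) mmul A (mpow B (f j))) (pw t k).
Proof.
move=> hA hB; elim: k f => [|k IH] f; first by rewrite big_ord0; exact: Wle_mid.
rewrite big_ord_recl pwS. rewrite -{1}(mulx1 t). apply: Wle_mul; last exact: IH.
apply: Wle_mul => //. by rewrite -(pw1 X (f ord0)); apply: Wle_pow.
Qed.
End Mat.

Section Lower.
Variable X : lrisemifield.
Variable n : nat.
Local Notation "a ⊕ b" := (@sadd X a b) (at level 50, left associativity).
Local Notation "a ⊗ b" := (@smul X a b) (at level 40, left associativity).
Local Notation "a ≼ b" := (@sle X a b) (at level 70).
Local Notation "𝟘" := (szero X).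
Local Notation "𝟙" := (sone X).
Local Notation mat := (mat X n).
Local Notation vec := (vec X n).

Lemma mulCA (x y z : X) : x ⊗ (y ⊗ z) = y ⊗ (x ⊗ z).
Proof. by rewrite !mulA (mulC x). Qed.

Lemma inv_le (x a t : X) : x <> 𝟘 -> sinv x ⊗ a ≼ t -> a ≼ t ⊗ x.
Proof. move=> hx h. apply: (mul_cancel (inv_neq0 hx)). by rewrite mulCA mulVx // mulx1. Qed.
Lemma le_inv (x a t : X) : x <> 𝟘 -> a ≼ t ⊗ x -> sinv x ⊗ a ≼ t.
Proof. move=> hx h. apply: le_trans (mul_le (sinv x) h) _. rewrite mulCA mulVx // mulx1; exact: le_refl. Qed.

Lemma vdot_term (u x : vec) i : u i ⊗ x i ≼ vdot u x.
Proof. apply: (le_bigr i); exact: le_refl. Qed.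

Variables (A B : mat) (p q : vec) (r : X).
Hypothesis hq : regular q.

Lemma Wle_Smat x t k : Wle x A t -> Wle x B 𝟙 -> Wle x (Smat A B k) (pw t k).
Proof. move=> hA hB; apply: Wle_big => f _; exact: Wle_prod. Qed.

Lemma Wle_Tmat x t k : Wle x A t -> Wle x B 𝟙 -> Wle x (Tmat A B k) (pw t k).
Proof.
move=> hA hB; case: k => [|k]; rewrite /Tmat.
  apply: Wle_big => m _; apply: Wle_mono (Wle_pow m hB); rewrite pw1; exact: le_refl.
apply: Wle_big => f _. rewrite -(mul1x (pw t k.+1)). apply: Wle_mul.
  rewrite -(pw1 X (f ord0)); exact: Wle_pow.
exact: Wle_prod.
Qed.

Lemma lower (x : vec) : regular x -> vle (mvec B x) x ->
  theta A B p q r ≼ objective A p q r x.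
Proof.
move=> hx hBx. set t := objective A p q r x.
have ht : objective A p q r x ≼ t by exact: le_refl.
rewrite /objective in ht.
case: (add_leP ht) => ht1 hr. case: (add_leP ht1) => ht2 hqx. case: (add_leP ht2) => hAx hpx.
have hA : Wle x A t.
  move=> i; apply: inv_le (hx i) _; apply: le_trans hAx; exact: (vdot_term (vinv x) (mvec A x) i).
have hB : Wle x B 𝟙 by move=> i; rewrite mul1x; exact: hBx.
have hp : forall i, p i ≼ t ⊗ x i.
  move=> i; apply: inv_le (hx i) _; apply: le_trans hpx; exact: (vdot_term (vinv x) p i).
have hqi : forall i, sinv (q i) ⊗ x i ≼ t.
  move=> i; apply: le_trans hqx; exact: (vdot_term (vinv q) x i).
rewrite /theta. apply: add_le => //. apply: add_le.
  apply: le_big => k _. apply: root_le => //. rewrite /tr. apply: le_big => i _.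
  apply: Wle_diag hx _ i; exact: Wle_Smat.
apply: le_big => k _. apply: root_le => //. rewrite /vdot. apply: le_big => i _.
rewrite /mvec sdistrl. apply: le_big => j _.
have hT := Wle_entry i j (Wle_Tmat k hA hB).
apply: le_trans (mul_le _ (mul_le _ (hp j))) _.
rewrite (mulCA (Tmat A B k i j)) (mulCA (vinv q i)).
rewrite !pwS. apply: mul_le.
apply: le_trans (mul_le _ hT) _. rewrite mulCA (mulC t). apply: mul_le. exact: hqi.
Qed.
End Lower.

Lemma nth_le_sumn (s : seq nat) j : nth 0 s j <= sumn s.
Proof. elim: s j => [|e s IH] [|j] //=; [exact: leq_addr| apply: leq_trans (IH j) (leq_addl _ _)]. Qed.
Lemma nth_lt (s : seq nat) m : sumn s < m -> forall j, nth 0 s j < m.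
Proof. move=> h j; exact: leq_ltn_trans (nth_le_sumn s j) h. Qed.
Lemma sum_nth (s : seq nat) : \sum_(j < size s) nth 0 s j = sumn s.
Proof. elim: s => [|e s IH]; first by rewrite big_ord0. by rewrite big_ord_recl /= IH. Qed.

Definition mkf (s : seq nat) m (h : sumn s < m) k : {ffun 'I_k -> 'I_m} :=
  [ffun j : 'I_k => Ordinal (nth_lt h j)].
Lemma mkfE s m h k j : (@mkf s m h k j : nat) = nth 0 s j.
Proof. by rewrite /mkf ffunE. Qed.

Section Blk.
Variable X : lrisemifield.
Variable n : nat.
Local Notation "a ⊕ b" := (@sadd X a b) (at level 50, left associativity).
Local Notation "a ⊗ b" := (@smul X a b) (at level 40, left associativity).
Local Notation "a ≼ b" := (@sle X a b) (at level 70).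
Local Notation "𝟘" := (szero X).
Local Notation "𝟙" := (sone X).
Local Notation mat := (mat X n).
Local Notation vec := (vec X n).
Variables (A B : mat).

Definition blk (l : seq nat) : mat := foldr (fun e W => mmul (mmul A (mpow B e)) W) (@mid X n) l.

Lemma blk_big l : \big[@mmul X n/@mid X n]_(j < size l) mmul A (mpow B (nth 0 l j)) = blk l.
Proof. elim: l => [|e l IH]; first by rewrite big_ord0. by rewrite big_ord_recl /= IH. Qed.

Lemma blk_Smat l i j : sumn l + size l <= n -> blk l i j ≼ Smat A B (size l) i j.
Proof.
move=> hl. have h : sumn l < (n - size l).+1 by lia.
rewrite /Smat madd_entry.
have hf : \sum_(j0 < size l) (mkf h (size l) j0 : nat) <= n - size l.
  rewrite (eq_bigr (fun j0 : 'I_(size l) => nth 0 l j0)); last by move=> j0 _; exact: mkfE.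
  rewrite sum_nth; lia.
apply: le_trans _ (big_term _ hf).
rewrite -blk_big.
have -> : \big[@mmul X n/@mid X n]_(j0 < size l) mmul A (mpow B (mkf h (size l) j0))
  = \big[@mmul X n/@mid X n]_(j0 < size l) mmul A (mpow B (nth 0 l j0)).
  apply: eq_bigr => j0 _; by rewrite mkfE.
exact: le_refl.
Qed.

Lemma blk_Tmat i0 l i j : i0 + sumn l + size l < n ->
  mmul (mpow B i0) (blk l) i j ≼ Tmat A B (size l) i j.
Proof.
case: l => [|e l] hl.
  rewrite /= mmul1r /Tmat /star madd_entry. rewrite addn0 addn0 in hl.
  have := big_term (fun m : 'I_n => mpow B m i j) (P:=xpredT) (j:=Ordinal hl) isT. done.
set s := i0 :: e :: l.
have h : sumn s < n - (size l).+1.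
  rewrite /s /=. move: hl => /=. lia.
change (mmul (mpow B i0) (blk (e :: l)) i j ≼ Tmat A B (size l).+1 i j).
rewrite /Tmat madd_entry.
have hf : \sum_(j0 < (size l).+2) (mkf h (size l).+2 j0 : nat) <= n - (size l).+1 - 1.
  rewrite (eq_bigr (fun j0 : 'I_(size s) => nth 0 s j0)); last by move=> j0 _; rewrite mkfE.
  rewrite (sum_nth s). move: h; rewrite /s /=; lia.
apply: le_trans _ (big_term _ hf).
rewrite mkfE.
have -> : \big[@mmul X n/@mid X n]_(j0 < (size l).+1) mmul A (mpow B (mkf h (size l).+2 (lift ord0 j0)))
  = \big[@mmul X n/@mid X n]_(j0 < size (e :: l)) mmul A (mpow B (nth 0 (e :: l) j0)).
  apply: eq_bigr => j0 _; by rewrite mkfE.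
rewrite (blk_big (e :: l)). exact: le_refl.
Qed.
End Blk.

Section Walk.
Variable X : lrisemifield.
Variable n : nat.
Local Notation "a ⊕ b" := (@sadd X a b) (at level 50, left associativity).
Local Notation "a ⊗ b" := (@smul X a b) (at level 40, left associativity).
Local Notation "a ≼ b" := (@sle X a b) (at level 70).
Local Notation "𝟘" := (szero X).
Local Notation "𝟙" := (sone X).
Local Notation mat := (mat X n).
Local Notation vec := (vec X n).
Variables (A B : mat) (c : X).
Local Notation C := (madd (mscale c A) B).

Lemma mmul_term (P Q : mat) i k j : P i k ⊗ Q k j ≼ mmul P Q i j.
Proof. apply: (le_bigr k); exact: le_refl. Qed.

Lemma walk m i j : exists i0 l, i0 + sumn l + size l = m /\
  mpow C m i j ≼ pw c (size l) ⊗ mmul (mpow B i0) (blk A B l) i j.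
Proof.
have hn : 0 < n by case: n i {j} => [[]|].
elim: m i j => [|m IH] i j.
  exists 0%N; exists [::]; split => //. rewrite /= mmul1l mul1x; exact: le_refl.
rewrite mpowS. have [k hk] := big_wit (fun k => C i k ⊗ mpow C m k j) hn.
have -> : mmul C (mpow C m) i j = C i k ⊗ mpow C m k j by exact: hk.
have [i0 [l [hs hle]]] := IH k j.
have hC : C i k = c ⊗ A i k \/ C i k = B i k := add_total _ _.
case: hC => ->.
  exists 0%N; exists (i0 :: l); split; first by rewrite /=; lia.
  rewrite /= mmul1l mmulA -mulA. apply: le_trans (mul_le _ (mul_le _ hle)) _.
  rewrite -mulA. apply: mul_le. rewrite mulCA. apply: mul_le. exact: mmul_term.
exists i0.+1; exists l; split; first by lia.
rewrite mpowS mmulA. apply: le_trans (mul_le _ hle) _.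
rewrite mulCA. apply: mul_le. exact: mmul_term.
Qed.
End Walk.

Lemma nonuniq_split (T : eqType) (V : seq T) : ~~ uniq V ->
  exists V1 x V2 V3, V = V1 ++ x :: V2 ++ x :: V3.
Proof.
elim: V => [|a V IH] //=. rewrite negb_and negbK. case/orP.
  case/splitPr => p1 p2. by exists [::], a, p1, p2.
move/IH => [V1 [x [V2 [V3 ->]]]]. by exists (a :: V1), x, V2, V3.
Qed.

Section Path.
Variable X : lrisemifield.
Variable n : nat.
Local Notation "a ⊕ b" := (@sadd X a b) (at level 50, left associativity).
Local Notation "a ⊗ b" := (@smul X a b) (at level 40, left associativity).
Local Notation "a ≼ b" := (@sle X a b) (at level 70).
Local Notation "𝟘" := (szero X).
Local Notation "𝟙" := (sone X).
Local Notation mat := (mat X n).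
Local Notation vec := (vec X n).
Variable C : mat.
Hypothesis hcyc : forall m x, 0 < m <= n -> mpow C m x x ≼ 𝟙.

Fixpoint wt (V : seq 'I_n) : X :=
  match V with
  | x :: t => match t with y :: _ => C x y ⊗ wt t | [::] => 𝟙 end
  | [::] => 𝟙
  end.

Lemma wt_le s i : wt (i :: s) ≼ mpow C (size s) i (last i s).
Proof.
elim: s i => [|y s IH] i /=.
  rewrite /mid eqxx; exact: le_refl.
apply: le_trans (mul_le _ (IH y)) _. apply: (le_bigr y); exact: le_refl.
Qed.

Lemma wt_wit m i j : mpow C m i j = 𝟘 \/
  exists s, size s = m /\ last i s = j /\ mpow C m i j ≼ wt (i :: s).
Proof.
elim: m i => [|m IH] i.
  rewrite /= /mid. case: eqP => [->|_]; [right; exists [::]; split; [|split] => //; exact: le_refl|by left].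
have hn : 0 < n by case: n i {IH} => [[]|].
rewrite mpowS. have [k hk] := big_wit (fun k => C i k ⊗ mpow C m k j) hn.
have -> : mmul C (mpow C m) i j = C i k ⊗ mpow C m k j by exact: hk.
case: (IH k) => [->|[s [hs [hl hw]]]]; first by left; rewrite mulx0.
right; exists (k :: s); split; [by rewrite /= hs|split; [exact: hl|]].
rewrite /=. exact: mul_le.
Qed.

Lemma wt_cat V1 x V2 : wt (V1 ++ x :: V2) = wt (V1 ++ [:: x]) ⊗ wt (x :: V2).
Proof.
elim: V1 => [|a V1 IH]; first by rewrite /= mul1x.
case: V1 IH => [|b V1] IH; first by rewrite /= mulx1.
change (C a b ⊗ wt ((b :: V1) ++ x :: V2) = (C a b ⊗ wt ((b :: V1) ++ [:: x])) ⊗ wt (x :: V2)).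
by rewrite IH mulA.
Qed.

Lemma star_term m i j : m < n -> mpow C m i j ≼ star C i j.
Proof. move=> hm. rewrite /star madd_entry. apply: (le_bigr (Ordinal hm)); exact: le_refl. Qed.

Lemma wt_star d N V : size V <= N -> 0 < size V -> wt V ≼ star C (head d V) (last d V).
Proof.
elim: N V => [|N IH] V hV hV0; first by move: hV0 hV; case: V.
case: V hV hV0 => [|i s] //= hVs _.
case: (ltnP (size s) n) => hsn.
  apply: le_trans (wt_le s i) _. exact: star_term.
have hnu : ~~ uniq (take n.+1 (i :: s)).
  apply/negP => /card_uniqP hu.
  have h2 : #|take n.+1 (i :: s)| <= n by apply: leq_trans (max_card _) _; rewrite card_ord.
  move: h2; rewrite hu size_take /= ltnS. case: ltnP => h1 h2; lia.
have hsz : size (take n.+1 (i :: s)) = n.+1 by rewrite size_take /= ltnS; case: ltnP => //; lia.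
case: (nonuniq_split hnu) => [V1 [x [V2 [V3 hsplit]]]].
pose V4 := V3 ++ drop n.+1 (i :: s).
have hVe : i :: s = V1 ++ x :: V2 ++ x :: V4.
  by rewrite /V4 -{1}(cat_take_drop n.+1 (i :: s)) hsplit -catA /= -catA.
have hV2 : size V2 < n by move: hsz; rewrite hsplit size_cat /= size_cat /=; lia.
have hw : wt (i :: s) ≼ wt (V1 ++ x :: V4).
  have e1 : wt (V1 ++ x :: V2 ++ x :: V4) = wt (V1 ++ [:: x]) ⊗ (wt (x :: V2 ++ [:: x]) ⊗ wt (x :: V4)).
    by rewrite wt_cat (wt_cat (x :: V2) x V4).
  have e2 : wt (V1 ++ x :: V4) = wt (V1 ++ [:: x]) ⊗ wt (x :: V4) by rewrite wt_cat.
  rewrite hVe e1 e2. apply: mul_le.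
  have hc : wt (x :: V2 ++ [:: x]) ≼ 𝟙.
    apply: le_trans (wt_le _ _) _. rewrite last_cat /= size_cat /= addn1. apply: hcyc. exact: hV2.
  rewrite -{2}(mul1x (wt (x :: V4))). exact: mul_ler.
apply: le_trans hw _.
have hhead : head d (V1 ++ x :: V4) = i by move: hVe; case: (V1) => [|a V1'] /= [->].
have hlast : last d (V1 ++ x :: V4) = last i s.
  have -> : last i s = last d (i :: s) by [].
  by rewrite hVe !last_cat /= last_cat.
have hsz2 : size (V1 ++ x :: V4) <= N.
  move: hVe => /(congr1 size). rewrite !size_cat /= size_cat /=. move: hVs hV2. lia.
have hpos : 0 < size (V1 ++ x :: V4) by rewrite size_cat /= addnS.
have := IH (V1 ++ x :: V4) hsz2 hpos.
by rewrite hhead hlast.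
Qed.

Lemma pow_star m i j : mpow C m i j ≼ star C i j.
Proof.
case: (wt_wit m i j) => [->|[s [hs [hl hw]]]]; first exact: le0x.
apply: le_trans hw _. have := wt_star i (leqnn (size (i :: s))) isT. by rewrite /= hl.
Qed.
End Path.

Fixpoint bl (f : nat) (l : seq nat) : seq nat :=
  match l with
  | [::] => [::]
  | e :: t => match t with [::] => [:: e + f] | _ => e :: bl f t end
  end.
Lemma bl_size f l : size (bl f l) = size l.
Proof. elim: l => [|e t IH] //; case: t IH => [|e' t] /= IH //. by rewrite IH. Qed.
Lemma bl_sumn f l : l != [::] -> sumn (bl f l) = sumn l + f.
Proof. elim: l => [|e t IH] //; case: t IH => [|e' t] /= IH _; first lia. rewrite IH //. lia. Qed.
Lemma sumn_nseq0 k : sumn (nseq k 0) = 0.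
Proof. by elim: k. Qed.

Section Aux.
Variable X : lrisemifield.
Variable n : nat.
Local Notation "a ⊕ b" := (@sadd X a b) (at level 50, left associativity).
Local Notation "a ⊗ b" := (@smul X a b) (at level 40, left associativity).
Local Notation "a ≼ b" := (@sle X a b) (at level 70).
Local Notation "𝟘" := (szero X).
Local Notation "𝟙" := (sone X).
Local Notation mat := (mat X n).
Local Notation vec := (vec X n).
Variables (A B : mat).

Lemma blk_nseq k : blk A B (nseq k 0) = mpow A k.
Proof. elim: k => [|k IH] //=. by rewrite IH mmul1r. Qed.

Lemma blk_bl f l : l != [::] -> mmul (blk A B l) (mpow B f) = blk A B (bl f l).
Proof.
elim: l => [|e t IH] //; case: t IH => [|e' t] /= IH _.
  by rewrite !mmul1r mmulA mpowD.
by rewrite mmulA IH.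
Qed.

Lemma diag_swap (P Q : mat) x : mmul P Q x x ≼ tr (mmul Q P).
Proof.
apply: le_big => k _. apply: (le_bigr k). apply: (le_bigr x). rewrite mulC; exact: le_refl.
Qed.
End Aux.

Section Main.
Variable X : lrisemifield.
Variable n : nat.
Local Notation "a ⊕ b" := (@sadd X a b) (at level 50, left associativity).
Local Notation "a ⊗ b" := (@smul X a b) (at level 40, left associativity).
Local Notation "a ≼ b" := (@sle X a b) (at level 70).
Local Notation "𝟘" := (szero X).
Local Notation "𝟙" := (sone X).
Local Notation mat := (mat X n).
Local Notation vec := (vec X n).
Hypothesis hn : 0 < n.
Variables (A B : mat) (p q : vec) (r : X).
Hypothesis hB : sle (Tr B) 𝟙.
Hypothesis hq : regular q.
Hypothesis hpos : slt 𝟘 (sadd (sadd (specrad A) (sroot 2 (vdot (vinv q) p))) r).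

Local Notation th := (theta A B p q r).
Local Notation S1 := (\big[@sadd X/𝟘]_(k < n) sroot k.+1 (tr (Smat A B k.+1))).
Local Notation S2 := (\big[@sadd X/𝟘]_(k < n) sroot k.+2 (vdot (vinv q) (mvec (Tmat A B k) p))).

Lemma S1_le : S1 ≼ th. Proof. rewrite /theta. apply: le_trans (le_addl _ _) (le_addl _ _). Qed.
Lemma S2_le : S2 ≼ th. Proof. rewrite /theta. apply: le_trans (le_addr _ _) (le_addl _ _). Qed.
Lemma r_le : r ≼ th. Proof. exact: le_addr. Qed.

Lemma one_star (D : mat) i : 𝟙 ≼ star D i i.
Proof. have := star_term D i i hn. by rewrite /= /mid eqxx. Qed.

Lemma root2_le : sroot 2 (vdot (vinv q) p) ≼ th.
Proof.
apply: le_trans S2_le. apply: (le_bigr (Ordinal hn)). apply: root_mono => //.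
apply: big_mono => i _. apply: mul_le. apply: (le_bigr i).
rewrite -{1}(mul1x (p i)). apply: mul_ler. exact: one_star.
Qed.

Lemma specrad_le : specrad A ≼ th.
Proof.
apply: le_trans S1_le. apply: big_mono => k _. apply: root_mono => //.
apply: big_mono => i _. have := @blk_Smat _ _ A B (nseq k.+1 0) i i.
rewrite blk_nseq size_nseq sumn_nseq0 add0n. apply. exact: ltn_ord.
Qed.

Lemma th_neq0 : th <> 𝟘.
Proof.
case: hpos => _ hne. apply: neq0_le (fun h => hne (esym h)) _.
apply: add_le; [apply: add_le; [exact: specrad_le|exact: root2_le]|exact: r_le].
Qed.

Lemma hS k : 0 < k <= n -> tr (Smat A B k) ≼ pw th k.
Proof.
case: k => [|k] // hk. have hk' : k < n by case/andP: hk.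
apply: root_pw => //. apply: le_trans S1_le.
apply: (le_bigr (Ordinal hk')); exact: le_refl.
Qed.

Lemma hT k : k < n -> vdot (vinv q) (mvec (Tmat A B k) p) ≼ pw th k.+2.
Proof.
move=> hk. apply: root_pw => //. apply: le_trans S2_le.
apply: (le_bigr (Ordinal hk)); exact: le_refl.
Qed.

Local Notation c := (sinv th).
Local Notation C := (madd (mscale c A) B).
Local Notation M := (star C).

Lemma cth : c ⊗ th = 𝟙. Proof. exact: mulVx th_neq0. Qed.
Lemma thc : th ⊗ c = 𝟙. Proof. by rewrite mulC cth. Qed.
Lemma pw_cth k : pw c k ⊗ pw th k = 𝟙. Proof. exact: pw_inv th_neq0. Qed.

Lemma cyc m x : 0 < m <= n -> mpow C m x x ≼ 𝟙.
Proof.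
move=> hm. have [i0 [l [hs hle]]] := walk A B c m x x.
apply: le_trans hle _.
case: l hs => [|e l] hs.
  rewrite /= mmul1r mul1x. rewrite !addn0 in hs. subst i0.
  have h1 : mpow B m x x ≼ tr (mpow B m) by apply: (le_bigr x); exact: le_refl.
  apply: le_trans h1 _. apply: le_trans _ hB.
  have hm1 : m.-1 < n by lia.
  have hm' : m = (m.-1).+1 by lia.
  rewrite /Tr {1}hm'. apply: (le_bigr (Ordinal hm1)). exact: le_refl.
set L := e :: l.
have hL : L != [::] by [].
apply: le_trans (mul_le _ (diag_swap _ _ x)) _.
rewrite blk_bl //. 
have hsz : sumn (bl i0 L) + size (bl i0 L) <= n by rewrite bl_size bl_sumn //; move: hs hm; rewrite /L /=; lia.
have h1 : tr (blk A B (bl i0 L)) ≼ tr (Smat A B (size L)).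
  apply: big_mono => i _. rewrite -(bl_size i0 L). exact: blk_Smat.
have h2 : tr (Smat A B (size L)) ≼ pw th (size L).
  apply: hS. move: hs hm; rewrite /L /= => hs hm. lia.
apply: le_trans (mul_le _ h1) _. apply: le_trans (mul_le _ h2) _.
rewrite pw_cth; exact: le_refl.
Qed.

Lemma CpowM m i j : mpow C m i j ≼ M i j.
Proof. have := @pow_star X n C cyc m i j. exact. Qed.

Lemma CM_le i k j : C i k ⊗ M k j ≼ M i j.
Proof.
rewrite {1}/star madd_entry sdistrl. apply: le_big => m _.
apply: le_trans (CpowM m.+1 i j). exact: mmul_term.
Qed.

Lemma qMp i j : sinv (q i) ⊗ M i j ⊗ p j ≼ th ⊗ th.
Proof.
rewrite /star madd_entry sdistrl sdistrr. apply: le_big => m _.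
have [i0 [l [hs hle]]] := walk A B c m i j.
have hl : i0 + sumn l + size l < n by rewrite hs; exact: ltn_ord.
have hTk : mmul (mpow B i0) (blk A B l) i j ≼ Tmat A B (size l) i j := blk_Tmat A B i j hl.
have hsl : size l < n by lia.
have hv : sinv (q i) ⊗ Tmat A B (size l) i j ⊗ p j ≼ pw th (size l).+2.
  apply: le_trans (hT hsl). rewrite -mulA. apply: (le_bigr i). apply: mul_le.
  apply: (le_bigr j). exact: le_refl.
apply: le_trans (mul_ler _ (mul_le _ (le_trans hle (mul_le _ hTk)))) _.
rewrite mulCA -mulA.
apply: le_trans (mul_le _ hv) _.
rewrite !pwS mulCA (mulCA (pw c _)) pw_cth mulx1; exact: le_refl.
Qed.

Local Notation qM := (vmat (vinv q) M).

Lemma qM_ge j : sinv (q j) ≼ qM j.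
Proof. apply: (le_bigr j). rewrite -{1}(mulx1 (sinv (q j))). apply: mul_le. exact: one_star. Qed.
Lemma qM_neq0 j : qM j <> 𝟘.
Proof. have h1 := inv_neq0 (@hq j). have h2 : sinv (q j) ≼ qM j by exact: qM_ge. exact: neq0_le h1 h2. Qed.

Lemma ux_le (u : vec) i : u i ≼ mvec M u i.
Proof. apply: (le_bigr i). rewrite -{1}(mul1x (u i)). apply: mul_ler. exact: one_star. Qed.

Lemma suff_dir (u : vec) : vle (vscale c p) u -> vle u (vscale th (vinv qM)) ->
  regular (mvec M u) -> vle (mvec B (mvec M u)) (mvec M u) /\ objective A p q r (mvec M u) = th.
Proof.
move=> hl hu hx.
have hCx : forall i, mvec C (mvec M u) i ≼ mvec M u i.
  move=> i. rewrite {1}/mvec. apply: le_big => k _. rewrite /mvec sdistrl.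
  apply: le_big => j _. rewrite mulA. apply: (le_bigr j). apply: mul_ler. exact: CM_le.
have hBx : vle (mvec B (mvec M u)) (mvec M u).
  move=> i. apply: le_trans (hCx i). apply: big_mono => k _. apply: mul_ler. rewrite /madd. exact: le_addr.
split => //.
apply: le_anti; last exact: lower.
rewrite /objective. apply: add_le; [apply: add_le; [apply: add_le|]|exact: r_le].
- apply: le_big => i _. apply: le_inv (hx i) _.
  apply: le_trans (mul_le th (hCx i)). rewrite /mvec sdistrl. apply: big_mono => k _.
  rewrite mulA. apply: mul_ler. rewrite -{1}(mul1x (A i k)) -thc -mulA. apply: mul_le. exact: le_addl.
- apply: le_big => i _. apply: le_inv (hx i) _.
  apply: le_trans (mul_le th (ux_le u i)).
  rewrite -{1}(mul1x (p i)) -thc -mulA. apply: mul_le. exact: hl.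
- apply: le_big => i _. rewrite /mvec sdistrl. apply: le_big => j _. rewrite mulA.
  have h1 : sinv (q i) ⊗ M i j ≼ qM j by apply: (le_bigr i); exact: le_refl.
  apply: le_trans (mul_ler _ h1) _. apply: le_trans (mul_le _ (hu j)) _.
  rewrite mulCA mulxV ?mulx1; [exact: le_refl|exact: qM_neq0].
Qed.

Lemma nec_dir (x : vec) : regular x -> vle (mvec B x) x -> objective A p q r x = th ->
  vle (vscale c p) x /\ vle x (vscale th (vinv qM)) /\ x = mvec M x.
Proof.
move=> hx hBx hobj.
have ht : objective A p q r x ≼ th by rewrite hobj; exact: le_refl.
rewrite /objective in ht.
case: (add_leP ht) => ht1 _. case: (add_leP ht1) => ht2 hqx. case: (add_leP ht2) => hAx hpx.
have hA : forall i, mvec A x i ≼ th ⊗ x i.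
  move=> i; apply: inv_le (hx i) _; apply: le_trans hAx; exact: (vdot_term (vinv x) (mvec A x) i).
have hp : forall i, p i ≼ th ⊗ x i.
  move=> i; apply: inv_le (hx i) _; apply: le_trans hpx; exact: (vdot_term (vinv x) p i).
have hCx : Wle x C 𝟙.
  move=> i. rewrite mul1x /mvec. apply: le_big => k _. rewrite /madd /mscale mulDl. apply: add_le.
    rewrite -mulA. apply: le_trans (mul_le c (le_trans _ (hA i))) _.
      apply: (le_bigr k); exact: le_refl.
    rewrite mulA cth mul1x; exact: le_refl.
  apply: le_trans (hBx i). apply: (le_bigr k); exact: le_refl.
have hM : Wle x M 𝟙.
  apply: Wle_big => m _. apply: Wle_mono (Wle_pow m hCx). rewrite pw1; exact: le_refl.
have hMx : mvec M x = x.
  apply: functional_extensionality => i. apply: le_anti; last exact: ux_le.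
  rewrite -(mul1x (x i)). exact: hM.
split; [|split; last by rewrite hMx].
  move=> i. apply: le_trans (mul_le c (hp i)) _. rewrite mulA cth mul1x; exact: le_refl.
move=> j. apply: (mul_cancel (qM_neq0 (j:=j))). rewrite mulCA mulxV ?mulx1; last exact: qM_neq0.
rewrite /vmat sdistrr. apply: le_big => i _. apply: le_trans hqx.
apply: (le_bigr i). rewrite -mulA. apply: mul_le.
have hh : M i j ⊗ x j ≼ mvec M x i by apply: (le_bigr j); exact: le_refl.
by rewrite hMx in hh.
Qed.

Lemma main_all :
  (exists x : vec, regular x /\ vle (mvec B x) x /\ objective A p q r x = th) /\
  (forall x : vec, regular x -> vle (mvec B x) x -> sle th (objective A p q r x)) /\
  (forall x : vec, regular x ->
     ((vle (mvec B x) x /\ objective A p q r x = th) <->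
      exists u : vec,
        vle (vscale c p) u /\ vle u (vscale th (vinv qM)) /\ x = mvec M u)).
Proof.
split; [|split].
- pose u : vec := vscale th (vinv qM).
  have hu0 : regular u by move=> i; apply: mul_neq0; [exact: th_neq0|exact: inv_neq0 (qM_neq0 (j:=i))].
  have hx : regular (mvec M u) by move=> i; exact: neq0_le (hu0 i) (ux_le u i).
  have hl : vle (vscale c p) u.
    move=> j. have h1 : qM j ⊗ p j ≼ th ⊗ th.
      rewrite sdistrr. apply: le_big => i _. exact: qMp.
    apply: (mul_cancel (qM_neq0 (j:=j))). rewrite /u /vscale /vinv (mulCA (qM j) th) mulxV ?mulx1; last exact: qM_neq0.
    rewrite mulCA. apply: le_trans (mul_le c h1) _. rewrite mulA cth mul1x; exact: le_refl.
  have [h1 h2] := suff_dir hl (fun i => le_refl (u i)) hx.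
  exists (mvec M u); split => //.
- move=> x hx hBx; exact: lower.
- move=> x hx; split.
    case=> hBx hobj. have [h1 [h2 h3]] := nec_dir hx hBx hobj. by exists x.
  case=> u [hl [hu hxe]]. subst x. exact: suff_dir hl hu hx.
Qed.
End Main.


Theorem corollary2 (X : lrisemifield) (n : nat) (hn : 0 < n)
  (A B : mat X n) (p q : vec X n) (r : X)
  (hB : sle (Tr B) (sone X))
  (hq : regular q)
  (hpos : slt (szero X)
            (sadd (sadd (specrad A) (sroot 2 (vdot (vinv q) p))) r)) :
  let th := theta A B p q r in
  let M := star (madd (mscale (sinv th) A) B) in
  (exists x : vec X n, regular x /\ vle (mvec B x) x /\ objective A p q r x = th) /\
  (forall x : vec X n, regular x -> vle (mvec B x) x ->
     sle th (objective A p q r x)) /\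
  (forall x : vec X n, regular x ->
     ((vle (mvec B x) x /\ objective A p q r x = th) <->
      exists u : vec X n,
        vle (vscale (sinv th) p) u /\
        vle u (vscale th (vinv (vmat (vinv q) M))) /\
        x = mvec M u)).
Proof.
move=> th M. apply: main_all => //.
Qed.
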